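(* For any continuous function $f:\mathrm{SO}(3)\to S^3$, there exists a rotation $R\in\mathrm{SO}(3)$ such that $d(R,\mathbf{R}_Q(f(R)))=\pi$.
   Context: $S^3\subset\mathbb{R}^4$ is the set of unit quaternions, identifying $w+x\mathbf{i}+y\mathbf{j}+z\mathbf{k}$ with $(w,x,y,z)$. $\mathbf{R}_Q:S^3\to\mathrm{SO}(3)$ is the standard conversion from a unit quaternion to the rotation it represents: $$\mathbf{R}_Q(w,x,y,z)=\begin{bmatrix}1-2y^2-2z^2 & 2(xy-zw) & 2(xz+yw)\\ 2(xy+zw) & 1-2x^2-2z^2 & 2(yz-xw)\\ 2(xz-yw) & 2(yz+xw) & 1-2x^2-2y^2\end{bmatrix}.$$ For $R_1,R_2\in\mathrm{SO}(3)$, $d(R_1,R_2)=\cos^{-1}\frac{\mathrm{tr}(R_2R_1^{-1})-1}{2}\in[0,\pi]$ is the angle of the rotation $R_2R_1^{-1}$. *)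

(* Defs.v *)
From HB Require Import structures.
From mathcomp Require Import all_boot all_order all_algebra.
From mathcomp Require Import all_classical all_reals all_analysis.
Set Implicit Arguments. Unset Strict Implicit. Unset Printing Implicit Defensive.
Import Order.TTheory GRing.Theory Num.Theory.
Import numFieldNormedType.Exports.
Local Open Scope classical_set_scope.
Local Open Scope ring_scope.

Definition SO3 (R : realType) : set 'M[R]_3 :=
  [set M | M *m M^T = 1%:M /\ \det M = 1].

(* A quaternion w + x i + y j + z k is the row vector (w, x, y, z). *)
Definition qw {R : realType} (q : 'rV[R]_4) : R := q ord0 (@Ordinal 4 0 isT).
Definition qx {R : realType} (q : 'rV[R]_4) : R := q ord0 (@Ordinal 4 1 isT).
Definition qy {R : realType} (q : 'rV[R]_4) : R := q ord0 (@Ordinal 4 2 isT).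
Definition qz {R : realType} (q : 'rV[R]_4) : R := q ord0 (@Ordinal 4 3 isT).

Definition S3 (R : realType) : set 'rV[R]_4 :=
  [set q | qw q ^+ 2 + qx q ^+ 2 + qy q ^+ 2 + qz q ^+ 2 = 1].

Definition RQ {R : realType} (q : 'rV[R]_4) : 'M[R]_3 :=
  let w := qw q in let x := qx q in let y := qy q in let z := qz q in
  \matrix_(i < 3, j < 3)
    match nat_of_ord i, nat_of_ord j with
    | 0, 0 => 1 - 2 * y ^+ 2 - 2 * z ^+ 2
    | 0, 1 => 2 * (x * y - z * w)
    | 0, _ => 2 * (x * z + y * w)
    | 1, 0 => 2 * (x * y + z * w)
    | 1, 1 => 1 - 2 * x ^+ 2 - 2 * z ^+ 2
    | 1, _ => 2 * (y * z - x * w)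
    | _, 0 => 2 * (x * z - y * w)
    | _, 1 => 2 * (y * z + x * w)
    | _, _ => 1 - 2 * x ^+ 2 - 2 * y ^+ 2
    end.

Definition rotdist {R : realType} (R1 R2 : 'M[R]_3) : R :=
  acos ((\tr (R2 *m invmx R1) - 1) / 2).

(* Main.v *)
Require Import Defs.
From HB Require Import structures.
From mathcomp Require Import all_boot all_order all_algebra.
From mathcomp Require Import all_classical all_reals all_analysis.
From mathcomp Require Import ring lra.
Import Order.TTheory GRing.Theory Num.Theory.
Import numFieldNormedType.Exports.
Local Open Scope classical_set_scope.
Local Open Scope ring_scope.

Lemma det3 (R : comNzRingType) (A : 'M[R]_3) : \det A =
  A 0 0 * (A 1 1 * A 2 2 - A 1 2 * A 2 1)
  - A 0 1 * (A 1 0 * A 2 2 - A 1 2 * A 2 0)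
  + A 0 2 * (A 1 0 * A 2 1 - A 1 1 * A 2 0).
Proof.
pose a (i j : nat) := A (inord i) (inord j).
have -> : A = \matrix_(i, j) a i j by apply/matrixP => i j; rewrite mxE /a !inord_val.
rewrite (expand_det_row _ ord0) !big_ord_recr big_ord0 /= /cofactor.
rewrite !(expand_det_row _ ord0) !big_ord_recr big_ord0 /= /cofactor.
rewrite !(expand_det_row _ ord0) !big_ord_recr !big_ord0 /= /cofactor.
rewrite !det_mx00 !mxE /=.
rewrite /bump /= !(add0n, addn0).
change (1 %% 3)%N with 1%N; change ((1 + 1) %% 3)%N with 2%N; rewrite !expr0 !expr1 ?sqrrN1.
ring.
Qed.

Section Main.
Variable R : realType.

Definition Mt (t : R) : 'M[R]_3 := \matrix_(i < 3, j < 3)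
  match nat_of_ord i, nat_of_ord j with
  | 0, 0 => cos t * cos t - sin t * sin t
  | 0, 1 => - (2 * (cos t * sin t))
  | 1, 0 => 2 * (cos t * sin t)
  | 1, 1 => cos t * cos t - sin t * sin t
  | 2, 2 => 1
  | _, _ => 0
  end.

Definition EA : 'M[R]_3 := \matrix_(i < 3, j < 3)
  match nat_of_ord i, nat_of_ord j with
  | 0, 0 => 1 | 1, 1 => 1 | _, _ => 0 end.
Definition EB : 'M[R]_3 := \matrix_(i < 3, j < 3)
  match nat_of_ord i, nat_of_ord j with
  | 0, 1 => -1 | 1, 0 => 1 | _, _ => 0 end.
Definition EC : 'M[R]_3 := \matrix_(i < 3, j < 3)
  match nat_of_ord i, nat_of_ord j with
  | 2, 2 => 1 | _, _ => 0 end.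

Lemma pyth2 (c s : R) : c ^+ 2 + s ^+ 2 = 1 ->
  (c * c - s * s) * (c * c - s * s) + (2 * (c * s)) * (2 * (c * s)) = 1.
Proof.
move=> h; have -> : (c * c - s * s) * (c * c - s * s) + (2 * (c * s)) * (2 * (c * s))
  = (c ^+ 2 + s ^+ 2) ^+ 2 by ring.
by rewrite h expr1n.
Qed.

Lemma Mt_SO3 t : @SO3 R (Mt t).
Proof.
have h := cos2Dsin2 t.
rewrite /Mt; move: (cos t) (sin t) h => c s h.
split.
  apply/matrixP => i j; rewrite !mxE !big_ord_recr big_ord0 /= !mxE /=.
  case: i j => [[|[|[|?]]] ?] [[|[|[|?]]] ?] //=;
   first [ring | apply: (etrans _ (pyth2 _ _ h)); ring].
rewrite (@det3 R) !mxE /=.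
apply: (etrans _ (pyth2 _ _ h)); ring.
Qed.

Lemma MtE t : Mt t = (cos t * cos t - sin t * sin t) *: EA
   + (2 * (cos t * sin t)) *: EB + EC.
Proof.
rewrite /Mt; move: (cos t) (sin t) => c s.
apply/matrixP => i j; rewrite !mxE.
case: i j => [[|[|[|?]]] ?] [[|[|[|?]]] ?] //=; ring.
Qed.

Lemma Mt_cont : continuous Mt.
Proof.
move=> t.
have -> : Mt = fun t => (cos t * cos t - sin t * sin t) *: EA
   + (2 * (cos t * sin t)) *: EB + EC by apply/funext => x; exact: MtE.
apply: cvgD; last exact: cvg_cst.
apply: cvgD; apply: cvgZr_tmp.
  apply: cvgB; apply: cvgM; (apply: continuous_cos || apply: continuous_sin).
apply: cvgM; first exact: cvg_cst.
apply: cvgM; (apply: continuous_cos || apply: continuous_sin).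
Qed.

End Main.
Arguments Mt {R} t.
Arguments Mt_SO3 {R} t.
Arguments Mt_cont {R}.

Theorem theorem1 (R : realType) (f : 'M[R]_3 -> 'rV[R]_4)
  (fcont : {within @SO3 R, continuous f})
  (fS3 : forall M, @SO3 R M -> @S3 R (f M)) :
  exists2 M, @SO3 R M & rotdist M (RQ (f M)) = pi.
Proof.
pose g := fun t => f (Mt t).
have gc : continuous g.
  move=> t.
  have H : f @ within (@SO3 R) (nbhs (Mt t)) --> f (Mt t).
    by rewrite (nbhs_subspace_in (Mt_SO3 t)); exact: (fcont (Mt t)).
  apply: (cvg_comp _ _ _ H) => P hP.
  have := Mt_cont t _ hP.
  change (nbhs t (Mt @^-1` (fun M => @SO3 R M -> P M)) -> nbhs t (Mt @^-1` P)).
  by apply: filterS => x /= /(_ (Mt_SO3 x)).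
pose phi := fun t => qw (g t) * cos t + qz (g t) * sin t.
have qwc : continuous (fun t => qw (g t)).
  by move=> t; apply: (continuous_comp (gc t)); exact: coord_continuous.
have qzc : continuous (fun t => qz (g t)).
  by move=> t; apply: (continuous_comp (gc t)); exact: coord_continuous.
have phic : continuous phi.
  move=> t; apply: cvgD; apply: cvgM; [exact: qwc t | exact: continuous_cos | exact: qzc t | exact: continuous_sin].
have gpi : g pi = g 0.
  by rewrite /g /Mt cospi sinpi cos0 sin0 !mulr0 !mulrNN.
have phi0 : phi 0 = qw (g 0) by rewrite /phi cos0 sin0 mulr1 mulr0 addr0.
have phipi : phi pi = - qw (g 0) by rewrite /phi cospi sinpi gpi mulrN1 mulr0 addr0.
have side : Num.min (phi 0) (phi pi) <= 0 <= Num.max (phi 0) (phi pi).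
  rewrite phi0 phipi; move: (qw (g 0)) => a.
  rewrite ge_min le_max; have [h|h] := lerP 0 a.
    by apply/andP; split; apply/orP; [right; rewrite oppr_le0 | left].
  by apply/andP; split; apply/orP; [left; exact: ltW | right; rewrite oppr_ge0 ltW].
have [c _ phic0] := @IVT R phi 0 pi 0 (pi_ge0 R) (ltac:(by apply: continuous_subspaceT)) side.
exists (Mt c); first exact: Mt_SO3.
have [HM Hd] := Mt_SO3 c.
have U : Mt c \in unitmx by rewrite unitmxE Hd unitr1.
rewrite /rotdist.
have -> : invmx (Mt c) = (Mt c)^T.
  by rewrite -[X in _ = X](mulKmx U) HM mulmx1.
have hN : qw (f (Mt c)) ^+ 2 + qx (f (Mt c)) ^+ 2 + qy (f (Mt c)) ^+ 2
   + qz (f (Mt c)) ^+ 2 = 1 := fS3 _ (Mt_SO3 c).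
have hK := cos2Dsin2 c.
move: phic0; rewrite /phi /g => hphi.
suff -> : \tr (RQ (f (Mt c)) *m (Mt c)^T) = -1.
  have -> : ((-1 - 1) / 2 : R) = -1 by field.
  exact: acosN1.
move: (f (Mt c)) hN hphi => q hN hphi.
rewrite /RQ.
move: (qw q) (qx q) (qy q) (qz q) hN hphi => w x y z hN hphi.
rewrite /Mt; move: (cos c) (sin c) hK hphi => C S hK hphi.
rewrite /mxtrace !big_ord_recr !big_ord0 /= !mxE !big_ord_recr !big_ord0 /= !mxE /=.
apply: (@etrans _ _ (4 * (w * C + z * S) ^+ 2 - 1
  + (1 - (w ^+ 2 + x ^+ 2 + y ^+ 2 + z ^+ 2)) * (2 * (C ^+ 2 - S ^+ 2) + 2)
  + (1 - (C ^+ 2 + S ^+ 2)) * (2 * w ^+ 2 + 2 * z ^+ 2))); first ring.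
rewrite hphi hN hK; ring.
Qed.
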